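(* Let $(G,\mathbf p)$ be a framework (with $\mathbf p$ pinned) such that $\dim(K)=1$, and let $k\ge1$ be an integer. If $(G,\mathbf p)$ has a $(1,k)$-flex, then it has a $(1,k)$-flex of the form $$\mathbf p(t)=\mathbf p+\mathbf p't+\mathbf p''t^2+\cdots+\mathbf p^{(k)}t^k$$ (a polynomial in $t$ with configuration coefficients $\mathbf p',\dots,\mathbf p^{(k)}$) with $\mathbf p^{(l)}\in\overline K$ for all $2\le l\le k$.
   Context: Fix a dimension $d$. A configuration is $\mathbf p=(\mathbf p_1,\dots,\mathbf p_n)$, $\mathbf p_i\in\mathbb R^d$; a framework $(G,\mathbf p)$ consists of a graph $G$ on $\{1,\dots,n\}$ and a configuration with $\mathbf p_i\ne\mathbf p_j$ on edges. A configuration $\mathbf q$ is in $\ell$-pinned position if $\mathbf q_1=0$ and, for $2\le i\le\ell+1$, $\mathbf q_i\in\mathrm{span}(e_1,\dots,e_{i-1})$; these form the $\ell$-pinned configuration space. If $\mathbf p$ has $\ell$-dimensional affine span, it is pinned if $\mathbf p_1,\dots,\mathbf p_{\ell+1}$ are affinely independent and $\mathbf p$ is in $\ell$-pinned position. All trajectories and flexes are $\ell$-pinned. A trajectory at $\mathbf p$ is an analytic non-constant map $t\mapsto\mathbf p(t)$ into $\ell$-pinned configuration space, $t\in[0,\varepsilon]$, $\mathbf p(0)=\mathbf p$. A $C^k$ function $\varphi(t)$ is $k$-vanishing if $\varphi^{(i)}(0)=0$ for $1\le i\le k$, and $k$-active if $(k-1)$-vanishing but not $k$-vanishing. With $\mathbf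 m(\mathbf q)=(|\mathbf q_i-\mathbf q_j|^2)_{ij\in E(G)}$, a $(j,k)$-flex is a $j$-active trajectory at $\mathbf p$ with $\mathbf m(\mathbf p(t))$ $k$-vanishing. $K$ is the linear space of $\ell$-pinned $\mathbf p'$ with $(\mathbf p_v-\mathbf p_w)\cdot(\mathbf p'_v-\mathbf p'_w)=0$ for all edges $vw$, and $\overline K$ is a fixed complementary linear subspace of $K$ in $\ell$-pinned configuration space. *)

(* Defs.v *)
From Stdlib Require Import Reals.
From Coquelicot Require Import Coquelicot.
Open Scope R_scope.

(* Vertices are indexed 0..n-1 (paper's vertex i is index i-1);
   coordinates are indexed 0..d-1 (paper's e_j is coordinate j-1).
   A configuration is a map  q : vertex -> coordinate -> R;
   only entries with vertex < n and coordinate < d are meaningful. *)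
Definition config := nat -> nat -> R.

Fixpoint sumR (m : nat) (f : nat -> R) : R :=
  match m with O => 0 | S m' => sumR m' f + f m' end.

Definition supported (n d : nat) (q : config) : Prop :=
  forall i j, (n <= i)%nat \/ (d <= j)%nat -> q i j = 0.

Definition dotR (d : nat) (x y : nat -> R) : R := sumR d (fun j => x j * y j).
Definition vsub (x y : nat -> R) : nat -> R := fun j => x j - y j.
Definition sqdist (d : nat) (x y : nat -> R) : R := dotR d (vsub x y) (vsub x y).

(* l-pinned position: q_1 = 0 and q_i in span(e_1..e_{i-1}) for 2 <= i <= l+1
   (0-based: q 0 = 0, and for 1 <= i <= l, coordinates j >= i of q i vanish) *)
Definition pinned_pos (n d l : nat) (q : config) : Prop :=
  supported n d q /\
  (forall j, q 0%nat j = 0) /\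
  (forall i j, (1 <= i <= l)%nat -> (i <= j)%nat -> q i j = 0).

Definition aff_indep_first (d l : nat) (p : config) : Prop :=
  forall c : nat -> R,
    (forall j, (j < d)%nat ->
       sumR l (fun i => c i * (p (S i) j - p 0%nat j)) = 0) ->
    forall i, (i < l)%nat -> c i = 0.

Definition in_aff_span_first (n d l : nat) (p : config) : Prop :=
  forall v, (v < n)%nat -> exists c : nat -> R,
    forall j, (j < d)%nat ->
      p v j - p 0%nat j = sumR l (fun i => c i * (p (S i) j - p 0%nat j)).

Definition pinned (n d l : nat) (p : config) : Prop :=
  (l < n)%nat /\
  aff_indep_first d l p /\ in_aff_span_first n d l p /\ pinned_pos n d l p.

Definition framework (n d : nat) (E : nat -> nat -> Prop) (p : config) : Prop :=
  supported n d p /\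
  forall v w, E v w ->
    (v < n)%nat /\ (w < n)%nat /\ v <> w /\ exists j, (j < d)%nat /\ p v j <> p w j.

Definition analytic_on (U : R -> Prop) (f : R -> R) : Prop :=
  forall t0, U t0 -> exists (r : R) (a : nat -> R), 0 < r /\
    forall t, Rabs (t - t0) < r -> is_pseries a (t - t0) (f t).

Definition trajectory (n d l : nat) (p : config) (q : R -> config) : Prop :=
  exists eps, 0 < eps /\
    (exists delta, 0 < delta /\ forall i j,
        analytic_on (fun t => - delta < t < eps + delta) (fun t => q t i j)) /\
    (forall i j, q 0 i j = p i j) /\
    (forall t, 0 <= t <= eps -> pinned_pos n d l (q t)) /\
    (exists t, 0 <= t <= eps /\ exists i j, q t i j <> p i j).

Definition vanishing (k : nat) (phi : R -> R) : Prop :=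
  forall m, (1 <= m <= k)%nat -> Derive_n phi m 0 = 0.

Definition traj_vanishing (n d k : nat) (q : R -> config) : Prop :=
  forall i j, (i < n)%nat -> (j < d)%nat -> vanishing k (fun t => q t i j).

Definition traj_active (n d k : nat) (q : R -> config) : Prop :=
  traj_vanishing n d (k - 1) q /\ ~ traj_vanishing n d k q.

Definition meas_vanishing (d : nat) (E : nat -> nat -> Prop) (k : nat)
  (q : R -> config) : Prop :=
  forall v w, E v w -> vanishing k (fun t => sqdist d (q t v) (q t w)).

Definition flex (n d l : nat) (E : nat -> nat -> Prop) (p : config)
  (a k : nat) (q : R -> config) : Prop :=
  trajectory n d l p q /\ traj_active n d a q /\ meas_vanishing d E k q.

Definition inK (n d l : nat) (E : nat -> nat -> Prop) (p p' : config) : Prop :=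
  pinned_pos n d l p' /\
  forall v w, E v w -> dotR d (vsub (p v) (p w)) (vsub (p' v) (p' w)) = 0.

Definition cfg0 : config := fun _ _ => 0.
Definition cfg_add (x y : config) : config := fun i j => x i j + y i j.
Definition cfg_scale (c : R) (x : config) : config := fun i j => c * x i j.

Definition dimK_one (n d l : nat) (E : nat -> nat -> Prop) (p : config) : Prop :=
  exists v, inK n d l E p v /\ v <> cfg0 /\
    forall w, inK n d l E p w -> exists c, w = cfg_scale c v.

Definition complement_K (n d l : nat) (E : nat -> nat -> Prop) (p : config)
  (Kbar : config -> Prop) : Prop :=
  Kbar cfg0 /\
  (forall x y, Kbar x -> Kbar y -> Kbar (cfg_add x y)) /\
  (forall c x, Kbar x -> Kbar (cfg_scale c x)) /\
  (forall x, Kbar x -> pinned_pos n d l x) /\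
  (forall x, Kbar x -> inK n d l E p x -> x = cfg0) /\
  (forall x, pinned_pos n d l x ->
     exists y z, inK n d l E p y /\ Kbar z /\ x = cfg_add y z).

Definition poly_traj (p : config) (k : nat) (c : nat -> config) : R -> config :=
  fun t i j => p i j + sumR k (fun m => c (S m) i j * t ^ (S m)).

(* Main.v *)
Require Import Defs.
From Stdlib Require Import Reals.
From Coquelicot Require Import Coquelicot.
From Stdlib Require Import Lra Lia FunctionalExtensionality Classical.
Open Scope R_scope.

Lemma sumR_ext N f g : (forall i, (i < N)%nat -> f i = g i) -> sumR N f = sumR N g.
Proof. induction N; intros H; simpl; auto. rewrite IHN by (intros; apply H; lia). rewrite H by lia. auto. Qed.

Lemma sumR_zero N f : (forall i, (i < N)%nat -> f i = 0) -> sumR N f = 0.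
Proof. induction N; intros H; simpl; auto. rewrite IHN by (intros; apply H; lia). rewrite H by lia. ring. Qed.

Lemma sumR_plus N f g : sumR N (fun i => f i + g i) = sumR N f + sumR N g.
Proof. induction N; simpl; [ring|rewrite IHN; ring]. Qed.

Lemma sumR_scal N a f : sumR N (fun i => a * f i) = a * sumR N f.
Proof. induction N; simpl; [ring|rewrite IHN; ring]. Qed.

Lemma sumR_split N M f : sumR (N + M) f = sumR N f + sumR M (fun i => f (N + i)%nat).
Proof. induction M; simpl. rewrite Nat.add_0_r; ring. rewrite Nat.add_succ_r. simpl. rewrite IHM. ring. Qed.

Lemma sumR_shift N f : sumR (S N) f = f O + sumR N (fun i => f (S i)).
Proof. induction N. simpl; ring. change (sumR (S (S N)) f) with (sumR (S N) f + f (S N)). rewrite IHN. simpl. ring. Qed.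

Lemma sum_f_R0_sumR f M : sum_f_R0 f M = sumR (S M) f.
Proof. induction M; simpl. ring. rewrite IHM. simpl. ring. Qed.

Definition polyfun (N : nat) (c : nat -> R) (t : R) : R := sumR N (fun i => c i * t ^ i).
Definition pc (N : nat) (c : nat -> R) (i : nat) : R := if Nat.ltb i N then c i else 0.

Lemma polyfun_pc N M c t : (N <= M)%nat -> polyfun M (pc N c) t = polyfun N c t.
Proof.
  intros H. replace M with (N + (M - N))%nat by lia. unfold polyfun.
  rewrite sumR_split. rewrite (sumR_zero (M - N)).
  - rewrite Rplus_0_r. apply sumR_ext. intros i Hi. unfold pc.
    replace (Nat.ltb i N) with true by (symmetry; apply Nat.ltb_lt; lia). auto.
  - intros i Hi. unfold pc. replace (Nat.ltb (N + i) N) with false by (symmetry; apply Nat.ltb_ge; lia). ring.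
Qed.

Lemma polyfun_split a b c t : polyfun (a + b) c t = polyfun a c t + t ^ a * polyfun b (fun i => c (a + i)%nat) t.
Proof. unfold polyfun. rewrite sumR_split. f_equal. rewrite <- sumR_scal. apply sumR_ext. intros. rewrite pow_add. ring. Qed.

Lemma polyfun_plus N c1 c2 t : polyfun N (fun i => c1 i + c2 i) t = polyfun N c1 t + polyfun N c2 t.
Proof. unfold polyfun. rewrite <- sumR_plus. apply sumR_ext. intros; ring. Qed.

Lemma polyfun_scal N a c t : polyfun N (fun i => a * c i) t = a * polyfun N c t.
Proof. unfold polyfun. rewrite <- sumR_scal. apply sumR_ext. intros; ring. Qed.

Lemma polyfun_mono N a b t : (a < N)%nat -> polyfun N (fun i => if Nat.eqb i a then b else 0) t = b * t ^ a.
Proof.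
  intros H. replace N with (S a + (N - S a))%nat by lia. rewrite polyfun_split.
  unfold polyfun at 2. rewrite (sumR_zero (N - S a)).
  2:{ intros i Hi. replace (Nat.eqb (S a + i) a) with false by (symmetry; apply Nat.eqb_neq; lia). ring. }
  unfold polyfun. simpl. rewrite Nat.eqb_refl. rewrite sumR_zero. ring.
  intros i Hi. replace (Nat.eqb i a) with false by (symmetry; apply Nat.eqb_neq; lia). ring.
Qed.

Lemma pseries_poly N c t : is_pseries (pc N c) t (polyfun N c t).
Proof.
  apply is_pseries_R. apply is_series_Reals. intros eps Heps. exists N. intros n Hn.
  rewrite sum_f_R0_sumR. fold (polyfun (S n) (pc N c) t). rewrite polyfun_pc by lia.
  unfold R_dist. rewrite Rminus_diag, Rabs_R0. auto.
Qed.

Lemma cv_disk (a : nat -> R) r : (forall y, Rabs y < r -> ex_pseries a y) ->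
  forall x, Rabs x < r -> Rbar_lt (Rabs x) (CV_radius a).
Proof.
  intros H x Hx. destruct (Rbar_lt_dec (Rabs x) (CV_radius a)) as [h|h]; auto.
  exfalso. apply Rbar_not_lt_le in h.
  set (y := (Rabs x + r) / 2).
  assert (Hy0 : 0 <= y) by (unfold y; pose proof (Rabs_pos x); lra).
  assert (Hyr : Rabs y < r) by (rewrite Rabs_pos_eq by auto; unfold y; lra).
  assert (Hlt : Rbar_lt (CV_radius a) (Rabs y)).
  { apply Rbar_le_lt_trans with (Rabs x); auto. simpl. rewrite (Rabs_pos_eq y) by auto. unfold y; lra. }
  apply (CV_disk_outside a y Hlt).
  destruct (H y Hyr) as [l Hl]. apply is_pseries_R in Hl.
  apply ex_series_lim_0. exists l. auto.
Qed.

Lemma dn_loc f g m lo hi t : (forall u, lo < u < hi -> f u = g u) -> lo < t < hi ->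
  Derive_n f m t = Derive_n g m t.
Proof.
  intros H Ht. apply Derive_n_ext_loc.
  assert (Hp : 0 < Rmin (t - lo) (hi - t)) by (apply Rmin_glb_lt; lra).
  exists (mkposreal _ Hp). intros u Hu. apply H.
  change (Rabs (u - t) < Rmin (t - lo) (hi - t)) in Hu.
  apply Rabs_def2 in Hu. destruct Hu as [H1 H2].
  pose proof (Rmin_l (t - lo) (hi - t)). pose proof (Rmin_r (t - lo) (hi - t)). lra.
Qed.

Lemma cv_pos (a : nat -> R) r f : 0 < r -> (forall t, Rabs t < r -> is_pseries a t (f t)) ->
  forall x, Rabs x < r -> Rbar_lt (Rabs x) (CV_radius a).
Proof. intros Hr H. apply cv_disk. intros y Hy. exists (f y). apply H; exact Hy. Qed.

Lemma coef_loc (a : nat -> R) r f m : 0 < r -> (forall t, Rabs t < r -> is_pseries a t (f t)) ->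
  Derive_n f m 0 = a m * INR (Factorial.fact m).
Proof.
  intros Hr H. rewrite (dn_loc f (PSeries a) m (-r) r).
  - apply Derive_n_coef. pose proof (cv_pos a r f Hr H 0). rewrite Rabs_R0 in H0. apply H0.
    auto.
  - intros u Hu. symmetry. apply is_pseries_unique. apply H. apply Rabs_def1; lra.
  - lra.
Qed.

Lemma cont_zero g d : continuity_pt g 0 -> 0 < d -> (forall t, 0 < t < d -> g t = 0) -> g 0 = 0.
Proof.
  intros Hc Hd H. destruct (Req_dec (g 0) 0) as [e|ne]; auto. exfalso.
  unfold continuity_pt, continue_in, limit1_in, limit_in in Hc.
  destruct (Hc (Rabs (g 0)) (Rabs_pos_lt _ ne)) as [al [Hal Hx]].
  set (x := Rmin al d / 2).
  assert (Hx0 : 0 < Rmin al d) by (apply Rmin_glb_lt; lra).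
  pose proof (Rmin_l al d). pose proof (Rmin_r al d).
  specialize (Hx x). simpl in Hx. unfold R_dist in Hx.
  rewrite H in Hx by (unfold x; lra).
  rewrite Rminus_0_l, Rabs_Ropp, Rminus_0_r in Hx.
  assert (Rabs x < al) by (rewrite Rabs_pos_eq; unfold x; lra).
  assert (0 <> x) by (unfold x; lra). specialize (Hx (conj (conj I H3) H2)). lra.
Qed.

Lemma half_const (a : nat -> R) r e f c m : 0 < r -> 0 < e ->
  (forall t, Rabs t < r -> is_pseries a t (f t)) ->
  (forall t, 0 <= t <= e -> f t = c) -> Derive_n f (S m) 0 = 0.
Proof.
  intros Hr He H Hc.
  assert (CV : forall x, Rabs x < r -> Rbar_lt (Rabs x) (CV_radius a)) by (apply (cv_pos a r f Hr H)).
  assert (E1 : forall t, -r < t < r -> Derive_n f (S m) t = PSeries (PS_derive_n (S m) a) t).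
  { intros t Ht. rewrite (dn_loc f (PSeries a) (S m) (-r) r); auto.
    apply Derive_n_PSeries. apply CV. apply Rabs_def1; lra.
    intros u Hu. symmetry. apply is_pseries_unique. apply H. apply Rabs_def1; lra. }
  rewrite E1 by lra.
  apply cont_zero with (Rmin r e).
  - apply PSeries_continuity. rewrite CV_radius_derive_n. apply CV. rewrite Rabs_R0; auto.
  - apply Rmin_glb_lt; auto.
  - intros t Ht. pose proof (Rmin_l r e). pose proof (Rmin_r r e).
    rewrite <- E1 by lra. rewrite (dn_loc f (fun _ => c) (S m) 0 e).
    apply Derive_n_const. intros u Hu; apply Hc; lra. lra.
Qed.

Definition is_poly (f : R -> R) : Prop := exists N c, forall t, f t = polyfun N c t.

Lemma poly_ext f g : is_poly f -> (forall t, f t = g t) -> is_poly g.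
Proof. intros [N [c H]] E. exists N, c. intros t. rewrite <- E. auto. Qed.

Lemma poly_const a : is_poly (fun _ => a).
Proof. exists 1%nat, (fun _ => a). intros t. unfold polyfun. simpl. ring. Qed.

Lemma poly_plus f g : is_poly f -> is_poly g -> is_poly (fun t => f t + g t).
Proof.
  intros [N1 [c1 H1]] [N2 [c2 H2]]. exists (N1 + N2)%nat, (fun i => pc N1 c1 i + pc N2 c2 i).
  intros t. rewrite polyfun_plus, !polyfun_pc by lia. rewrite H1, H2. auto.
Qed.

Lemma poly_scal a f : is_poly f -> is_poly (fun t => a * f t).
Proof. intros [N [c H]]. exists N, (fun i => a * c i). intros t. rewrite polyfun_scal, H. auto. Qed.

Lemma poly_minus f g : is_poly f -> is_poly g -> is_poly (fun t => f t - g t).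
Proof. intros Hf Hg. apply poly_ext with (fun t => f t + (-1) * g t). apply poly_plus; auto. apply poly_scal; auto. intros; ring. Qed.

Lemma poly_mul_t f : is_poly f -> is_poly (fun t => t * f t).
Proof.
  intros [N [c H]]. exists (S N), (fun i => match i with O => 0 | S i' => c i' end).
  intros t. unfold polyfun. rewrite sumR_shift. rewrite H. unfold polyfun. rewrite <- sumR_scal.
  simpl. rewrite Rmult_0_l, Rplus_0_l. apply sumR_ext. intros; simpl; ring.
Qed.

Lemma poly_tpow m f : is_poly f -> is_poly (fun t => t ^ m * f t).
Proof.
  intros Hf. induction m. apply poly_ext with f; auto. intros; simpl; ring.
  apply poly_ext with (fun t => t * (t ^ m * f t)). apply poly_mul_t; auto. intros; simpl; ring.
Qed.

Lemma poly_mult f g : is_poly f -> is_poly g -> is_poly (fun t => f t * g t).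
Proof.
  intros [N [c H]] Hg. apply poly_ext with (fun t => polyfun N c t * g t).
  2:{ intros; rewrite H; auto. }
  clear H. induction N.
  - apply poly_ext with (fun _ => 0). apply poly_const. intros; unfold polyfun; simpl; ring.
  - apply poly_ext with (fun t => polyfun N c t * g t + c N * (t ^ N * g t)).
    apply poly_plus; auto. apply poly_scal, poly_tpow; auto.
    intros t. unfold polyfun. simpl. ring.
Qed.

Lemma poly_pow f m : is_poly f -> is_poly (fun t => f t ^ m).
Proof.
  intros Hf. induction m. apply poly_ext with (fun _ => 1). apply poly_const. intros; simpl; auto.
  apply poly_ext with (fun t => f t * f t ^ m). apply poly_mult; auto. intros; simpl; auto.
Qed.

Lemma poly_comp f g : is_poly f -> is_poly g -> is_poly (fun t => f (g t)).
Proof.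
  intros [N [c H]] Hg. apply poly_ext with (fun t => polyfun N c (g t)).
  2:{ intros; rewrite H; auto. }
  clear H. induction N.
  - apply poly_ext with (fun _ => 0). apply poly_const. intros; unfold polyfun; simpl; ring.
  - apply poly_ext with (fun t => polyfun N c (g t) + c N * (g t ^ N)).
    apply poly_plus; auto. apply poly_scal, poly_pow; auto.
    intros t. unfold polyfun. simpl. ring.
Qed.

Lemma poly_sumR d (F : nat -> R -> R) : (forall j, is_poly (F j)) -> is_poly (fun t => sumR d (fun j => F j t)).
Proof.
  intros H. induction d. apply poly_ext with (fun _ => 0). apply poly_const. intros; simpl; auto. simpl. apply poly_plus; auto.
Qed.

Lemma poly_id : is_poly (fun t => t).
Proof. apply poly_ext with (fun t => t * 1). apply poly_mul_t, poly_const. intros; ring. Qed.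

Definition coefp (f : R -> R) (m : nat) : R := Derive_n f m 0 / INR (Factorial.fact m).

Lemma coef_series a f m : (forall t, is_pseries a t (f t)) -> coefp f m = a m.
Proof.
  intros H. unfold coefp. rewrite (coef_loc a 1 f m); try lra. field. apply INR_fact_neq_0.
  intros; auto.
Qed.

Lemma poly_series f : is_poly f -> exists a, forall t, is_pseries a t (f t).
Proof. intros [N [c H]]. exists (pc N c). intros t. rewrite H. apply pseries_poly. Qed.

Lemma coef_polyfun N c m : coefp (polyfun N c) m = pc N c m.
Proof. apply coef_series. intros; apply pseries_poly. Qed.

Lemma coef_const a m : coefp (fun _ => a) m = if Nat.eqb m 0 then a else 0.
Proof.
  rewrite (coef_series (pc 1 (fun _ => a))). unfold pc. destruct m; simpl; auto.
  intros t. pose proof (pseries_poly 1 (fun _ => a) t) as H. replace (polyfun 1 (fun _ => a) t) with a in H by (unfold polyfun; simpl; ring). exact H.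
Qed.

Lemma coef0 f : coefp f 0 = f 0.
Proof. unfold coefp. simpl. field. Qed.

Lemma coef_lin f g a b al m : (forall t, is_pseries a t (f t)) -> (forall t, is_pseries b t (g t)) ->
  coefp (fun t => f t + al * g t) m = a m + al * b m.
Proof.
  intros Ha Hb. apply (coef_series (fun n => a n + al * b n)).
  intros t. pose proof (is_pseries_scal al b t (g t) (Rmult_comm _ _) (Hb t)) as H1.
  pose proof (is_pseries_plus a _ t _ _ (Ha t) H1) as H2. exact H2.
Qed.

Definition eqk (k : nat) (f g : R -> R) : Prop :=
  exists h, is_poly h /\ forall t, f t = g t + t ^ (S k) * h t.

Lemma eqk_refl k f : eqk k f f.
Proof. exists (fun _ => 0). split. apply poly_const. intros; ring. Qed.

Lemma eqk_ext k f g f' g' : (forall t, f t = f' t) -> (forall t, g t = g' t) -> eqk k f g -> eqk k f' g'.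
Proof. intros E1 E2 [h [Hh H]]. exists h. split; auto. intros t. rewrite <- E1, <- E2. auto. Qed.

Lemma eqk_sym k f g : eqk k f g -> eqk k g f.
Proof. intros [h [Hh H]]. exists (fun t => (-1) * h t). split. apply poly_scal; auto. intros t. rewrite H. ring. Qed.

Lemma eqk_trans k f g u : eqk k f g -> eqk k g u -> eqk k f u.
Proof.
  intros [h1 [H1 E1]] [h2 [H2 E2]]. exists (fun t => h1 t + h2 t). split. apply poly_plus; auto.
  intros t. rewrite E1, E2. ring.
Qed.

Lemma eqk_plus k f1 g1 f2 g2 : eqk k f1 g1 -> eqk k f2 g2 -> eqk k (fun t => f1 t + f2 t) (fun t => g1 t + g2 t).
Proof.
  intros [h1 [H1 E1]] [h2 [H2 E2]]. exists (fun t => h1 t + h2 t). split. apply poly_plus; auto.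
  intros t. rewrite E1, E2. ring.
Qed.

Lemma eqk_minus k f1 g1 f2 g2 : eqk k f1 g1 -> eqk k f2 g2 -> eqk k (fun t => f1 t - f2 t) (fun t => g1 t - g2 t).
Proof.
  intros [h1 [H1 E1]] [h2 [H2 E2]]. exists (fun t => h1 t - h2 t). split. apply poly_minus; auto.
  intros t. rewrite E1, E2. ring.
Qed.

Lemma eqk_mult k f1 g1 f2 g2 : is_poly f2 -> is_poly g1 -> eqk k f1 g1 -> eqk k f2 g2 ->
  eqk k (fun t => f1 t * f2 t) (fun t => g1 t * g2 t).
Proof.
  intros P2 Q1 [h1 [H1 E1]] [h2 [H2 E2]]. exists (fun t => h1 t * f2 t + g1 t * h2 t).
  split. apply poly_plus; apply poly_mult; auto.
  intros t. rewrite E1, E2. ring.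
Qed.

Lemma eqk_scal k a f g : eqk k f g -> eqk k (fun t => a * f t) (fun t => a * g t).
Proof. intros [h [Hh E]]. exists (fun t => a * h t). split. apply poly_scal; auto. intros t. rewrite E. ring. Qed.

Lemma eqk_sumR k d (F G : nat -> R -> R) : (forall j, eqk k (F j) (G j)) ->
  eqk k (fun t => sumR d (fun j => F j t)) (fun t => sumR d (fun j => G j t)).
Proof.
  intros H. induction d. apply eqk_ext with (fun _ => 0) (fun _ => 0); try (intros; simpl; auto). apply eqk_refl. simpl. apply eqk_plus; auto.
Qed.

Lemma eqk_comp k f g psi : eqk k f g -> is_poly psi ->
  eqk k (fun t => f (t * psi t)) (fun t => g (t * psi t)).
Proof.
  intros [h [Hh E]] Hp. exists (fun t => psi t ^ (S k) * h (t * psi t)). split.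
  apply poly_mult. apply poly_pow; auto. apply poly_comp; auto. apply poly_mul_t; auto.
  intros t. rewrite E. rewrite Rpow_mult_distr. ring.
Qed.

Lemma eqk_mono k k' f g : (k <= k')%nat -> eqk k' f g -> eqk k f g.
Proof.
  intros Hk [h [Hh E]]. exists (fun t => t ^ (k' - k) * h t). split. apply poly_tpow; auto.
  intros t. rewrite E. replace (S k') with (S k + (k' - k))%nat by lia. rewrite pow_add. ring.
Qed.

Lemma eqk_tshift k m f g : eqk k f g -> eqk (k + m) (fun t => t ^ m * f t) (fun t => t ^ m * g t).
Proof.
  intros [h [Hh E]]. exists h. split; auto. intros t. rewrite E.
  replace (S (k + m)) with (S k + m)%nat by lia. rewrite pow_add. ring.
Qed.

Lemma eqk_pow k f g m : is_poly f -> is_poly g -> eqk k f g -> eqk k (fun t => f t ^ m) (fun t => g t ^ m).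
Proof.
  intros Pf Pg H. induction m. apply eqk_ext with (fun _ => 1) (fun _ => 1); try (intros; simpl; auto). apply eqk_refl.
  simpl. apply eqk_mult; auto. apply poly_pow; auto.
Qed.

Lemma eqk_coef k f g m : is_poly g -> eqk k f g -> (m <= k)%nat -> coefp f m = coefp g m.
Proof.
  intros Pg [h [Hh E]] Hm. destruct (poly_series g Pg) as [a Ha]. destruct (poly_series h Hh) as [b Hb].
  rewrite (coef_series a g m Ha).
  rewrite (coef_series (PS_plus a (PS_incr_n b (S k))) f m).
  - unfold PS_plus. rewrite PS_incr_n_simplify. destruct (Compare_dec.le_lt_dec (S k) m). lia.
    simpl. change (a m + 0 = a m). ring.
  - intros t. rewrite E. pose proof (is_pseries_incr_n b (S k) t (h t) (Hb t)).
    rewrite pow_n_pow in H. apply (is_pseries_plus a _ t (g t) _ (Ha t) H).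
Qed.

Lemma eqk_trunc k f : is_poly f -> eqk k f (fun t => polyfun (S k) (coefp f) t).
Proof.
  intros [N [c E]].
  assert (C : forall m, coefp f m = pc N c m).
  { intros m. rewrite <- coef_polyfun. unfold coefp. rewrite (Derive_n_ext f (polyfun N c)); auto. }
  exists (fun t => polyfun (N - S k) (fun i => pc N c (S k + i)) t). split.
  exists (N - S k)%nat, (fun i => pc N c (S k + i)). auto.
  intros t. rewrite E. rewrite <- (polyfun_pc N (S k + (N - S k)) c t) by lia.
  rewrite polyfun_split. f_equal. unfold polyfun. apply sumR_ext. intros. rewrite C. auto.
Qed.

Definition cc (p : config) (c : nat -> config) (i j : nat) (m : nat) : R :=
  match m with O => p i j | S _ => c m i j end.

Lemma pt_polyfun p k c t i j : poly_traj p k c t i j = polyfun (S k) (cc p c i j) t.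
Proof.
  unfold poly_traj, polyfun. rewrite sumR_shift. simpl. rewrite Rmult_1_r. f_equal.
Qed.

Lemma pt_poly p k c i j : is_poly (fun t => poly_traj p k c t i j).
Proof. exists (S k), (cc p c i j). intros; apply pt_polyfun. Qed.

Lemma pt_coef p k c i j m : coefp (fun t => poly_traj p k c t i j) m = pc (S k) (cc p c i j) m.
Proof. rewrite <- coef_polyfun. unfold coefp. rewrite (Derive_n_ext _ (polyfun (S k) (cc p c i j))); auto.
  intros; apply pt_polyfun. Qed.

Lemma pt_at0 p k c : poly_traj p k c 0 = p.
Proof.
  apply functional_extensionality; intros i. apply functional_extensionality; intros j.
  unfold poly_traj. rewrite sumR_zero. ring. intros m _. simpl. ring.
Qed.

Lemma mu_poly d (F : R -> config) v w : (forall i j, is_poly (fun t => F t i j)) ->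
  is_poly (fun t => sqdist d (F t v) (F t w)).
Proof.
  intros H. unfold sqdist, dotR, vsub.
  apply (poly_sumR d (fun j t => (F t v j - F t w j) * (F t v j - F t w j))).
  intros j. apply poly_mult; apply poly_minus; auto.
Qed.

Lemma mu_eqk k d (F G : R -> config) v w : (forall i j, is_poly (fun t => F t i j)) ->
  (forall i j, is_poly (fun t => G t i j)) -> (forall i j, eqk k (fun t => F t i j) (fun t => G t i j)) ->
  eqk k (fun t => sqdist d (F t v) (F t w)) (fun t => sqdist d (G t v) (G t w)).
Proof.
  intros HF HG H. unfold sqdist, dotR, vsub.
  apply (eqk_sumR k d (fun j t => (F t v j - F t w j) * (F t v j - F t w j))
                      (fun j t => (G t v j - G t w j) * (G t v j - G t w j))).
  intros j. apply eqk_mult. apply poly_minus; auto. apply poly_minus; auto.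
  apply eqk_minus; auto. apply eqk_minus; auto.
Qed.

Definition Mco (d : nat) (a : nat -> config) (v w : nat) (m : nat) : R :=
  sumR d (fun j => PS_mult (fun i => a i v j - a i w j) (fun i => a i v j - a i w j) m).

Lemma ps_minus (a b : nat -> R) x la lb : is_pseries a x la -> is_pseries b x lb ->
  is_pseries (fun n => a n - b n) x (la - lb).
Proof. intros Ha Hb. pose proof (is_pseries_minus a b x la lb Ha Hb) as H. exact H. Qed.

Lemma ps_plus (a b : nat -> R) x la lb : is_pseries a x la -> is_pseries b x lb ->
  is_pseries (fun n => a n + b n) x (la + lb).
Proof. intros Ha Hb. pose proof (is_pseries_plus a b x la lb Ha Hb) as H. exact H. Qed.

Lemma GL (f : R -> config) (a : nat -> config) d v w rho : 0 < rho ->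
  (forall j t, (j < d)%nat -> Rabs t < rho ->
     is_pseries (fun m => a m v j) t (f t v j) /\ is_pseries (fun m => a m w j) t (f t w j)) ->
  forall m, Derive_n (fun t => sqdist d (f t v) (f t w)) m 0 = Mco d a v w m * INR (Factorial.fact m).
Proof.
  intros Hr H m. apply coef_loc with rho; auto.
  induction d; intros t Ht.
  - unfold sqdist, dotR, Mco. simpl. apply (is_pseries_ext (pc 0 (fun _ => 0))).
    intros n; destruct n; reflexivity.
    pose proof (pseries_poly 0 (fun _ => 0) t) as P. exact P.
  - assert (IH : is_pseries (Mco d a v w) t (sqdist d (f t v) (f t w))).
    { apply IHd; auto. }
    refine (ps_plus (Mco d a v w) _ t (sqdist d (f t v) (f t w)) _ IH _).
    assert (D : forall u, Rabs u < rho -> is_pseries (fun i => a i v d - a i w d) u (f u v d - f u w d)).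
    { intros u Hu. destruct (H d u) as [H1 H2]; auto. apply ps_minus; auto. }
    pose proof (cv_pos _ rho _ Hr D t Ht) as CV.
    apply (is_pseries_mult _ _ t _ _ (D t Ht) (D t Ht) CV CV).
Qed.

Definition Inv n d l (E : nat -> nat -> Prop) (p : config) (Kbar : config -> Prop) k (A1 : config) s (B : nat -> config) :=
  B 1%nat = A1 /\ (forall m, pinned_pos n d l (B m)) /\ (forall m, (2 <= m <= s)%nat -> Kbar (B m)) /\
  (forall v w, E v w -> eqk k (fun t => sqdist d (poly_traj p k B t v) (poly_traj p k B t w))
                             (fun _ => sqdist d (p v) (p w))).

Lemma series_mono s t : is_pseries (pc (S s) (fun i => if Nat.eqb i s then 1 else 0)) t (t ^ s).
Proof.
  pose proof (pseries_poly (S s) (fun i => if Nat.eqb i s then 1 else 0) t) as H.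
  rewrite polyfun_mono in H by lia. rewrite Rmult_1_l in H. exact H.
Qed.

Lemma series_pt p k B i j t : is_pseries (pc (S k) (cc p B i j)) t (poly_traj p k B t i j).
Proof. rewrite pt_polyfun. apply pseries_poly. Qed.

Lemma zero_pres p k B (phi : R -> R) i j m : p i j = 0 -> (forall m, B m i j = 0) ->
  coefp (fun t => poly_traj p k B (phi t) i j) m = 0.
Proof.
  intros Hp HB. unfold coefp. rewrite (Derive_n_ext _ (fun _ => 0)).
  - fold (coefp (fun _ => 0) m). rewrite coef_const. destruct (Nat.eqb m 0); auto.
  - intros t. unfold poly_traj. rewrite Hp. rewrite sumR_zero. ring. intros. rewrite HB. ring.
Qed.

Lemma step n d l E p Kbar k A1 s B :
  pinned_pos n d l p ->
  (forall x, pinned_pos n d l x -> exists g z, Kbar z /\ forall i j, x i j = g * A1 i j + z i j) ->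
  (1 <= s)%nat -> (S s <= k)%nat -> Inv n d l E p Kbar k A1 s B ->
  exists B', Inv n d l E p Kbar k A1 (S s) B'.
Proof.
  intros Pp Dec Hs Hsk [HB1 [HBp [HBK HBe]]].
  destruct (Dec (B (S s)) (HBp _)) as [g [z [Hz Hx]]].
  set (phi := fun t => t - g * t ^ (S s)).
  set (psi := fun t => 1 - g * t ^ s).
  assert (Ephi : forall t, t * psi t = phi t).
  { intros t. unfold phi, psi. simpl. ring. }
  assert (Pphi : is_poly phi).
  { apply poly_minus. apply poly_id. apply poly_scal. apply poly_pow. apply poly_id. }
  assert (Ppsi : is_poly psi).
  { apply poly_minus. apply poly_const. apply poly_scal. apply poly_pow. apply poly_id. }
  set (Q := fun t => poly_traj p k B (phi t)).
  set (B' := fun m i j => coefp (fun t => Q t i j) m).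
  assert (Qpoly : forall i j, is_poly (fun t => Q t i j)).
  { intros i j. apply (poly_comp (fun t => poly_traj p k B t i j) phi); auto. apply pt_poly. }
  assert (Q0 : forall i j, B' 0%nat i j = p i j).
  { intros i j. unfold B'. rewrite coef0. unfold Q. replace (phi 0) with 0 by (unfold phi; simpl; ring).
    rewrite pt_at0. auto. }
  assert (Trunc : forall i j, eqk k (fun t => Q t i j) (fun t => poly_traj p k B' t i j)).
  { intros i j. eapply eqk_ext; [ | | apply (eqk_trunc k _ (Qpoly i j))]. intros; auto.
    intros t. rewrite pt_polyfun. unfold polyfun. apply sumR_ext. intros m _. destruct m.
    simpl. rewrite <- (Q0 i j). auto. auto. }
  set (Tm := fun m t => match m with O => t - g * t ^ (S s) | _ => t ^ (S m) end).
  assert (ET : forall m, eqk (S s) (fun t => phi t ^ (S m)) (Tm m)).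
  { intros m. destruct m.
    - apply eqk_ext with phi phi. intros; simpl; ring. intros; unfold Tm, phi; simpl; ring. apply eqk_refl.
    - assert (E1 : eqk (s - 1) psi (fun _ => 1)).
      { exists (fun _ => - g). split. apply poly_const. intros t. unfold psi.
        replace (S (s - 1)) with s by lia. ring. }
      pose proof (eqk_pow _ _ _ (S (S m)) Ppsi (poly_const 1) E1) as E2.
      pose proof (eqk_tshift _ (S (S m)) _ _ E2) as E3.
      apply eqk_mono with (k' := (s - 1 + S (S m))%nat). lia.
      eapply eqk_ext; [ | | exact E3].
      + intros t. simpl. rewrite <- (Ephi t). rewrite Rpow_mult_distr. simpl. ring.
      + intros t. unfold Tm. rewrite pow1. ring. }
  assert (Low : forall i j, eqk (S s) (fun t => Q t i j)
           (fun t => poly_traj p k B t i j + (- (g * A1 i j)) * t ^ (S s))).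
  { intros i j.
    assert (E4 : eqk (S s) (fun t => p i j + sumR k (fun m => B (S m) i j * phi t ^ (S m)))
                           (fun t => p i j + sumR k (fun m => B (S m) i j * Tm m t))).
    { apply eqk_plus. apply eqk_refl.
      apply (eqk_sumR (S s) k (fun m t => B (S m) i j * phi t ^ (S m)) (fun m t => B (S m) i j * Tm m t)).
      intros m. apply eqk_scal. apply ET. }
    eapply eqk_ext; [ | | exact E4]. intros; unfold Q, poly_traj; auto.
    intros t. unfold poly_traj. destruct k as [|k']. lia. rewrite !sumR_shift.
    rewrite HB1. unfold Tm. simpl. ring. }
  assert (Rpoly : forall i j, is_poly (fun t => poly_traj p k B t i j + (- (g * A1 i j)) * t ^ (S s))).
  { intros i j. apply poly_plus. apply pt_poly. apply poly_scal. apply poly_pow. apply poly_id. }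
  assert (Coef : forall i j m, (m <= S s)%nat -> B' m i j =
      pc (S k) (cc p B i j) m + (- (g * A1 i j)) * pc (S (S s)) (fun i => if Nat.eqb i (S s) then 1 else 0) m).
  { intros i j m Hm. unfold B'. rewrite (eqk_coef _ _ _ m (Rpoly i j) (Low i j) Hm).
    apply coef_lin. intros; apply series_pt. intros; apply series_mono. }
  assert (EqS : forall m, (1 <= m <= s)%nat -> B' m = B m).
  { intros m Hm. apply functional_extensionality; intros i. apply functional_extensionality; intros j.
    rewrite Coef by lia. unfold pc.
    replace (Nat.ltb m (S k)) with true by (symmetry; apply Nat.ltb_lt; lia).
    replace (Nat.ltb m (S (S s))) with true by (symmetry; apply Nat.ltb_lt; lia).
    replace (Nat.eqb m (S s)) with false by (symmetry; apply Nat.eqb_neq; lia).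
    destruct m. lia. simpl. ring. }
  assert (EqZ : B' (S s) = z).
  { apply functional_extensionality; intros i. apply functional_extensionality; intros j.
    rewrite Coef by lia. unfold pc.
    replace (Nat.ltb (S s) (S k)) with true by (symmetry; apply Nat.ltb_lt; lia).
    replace (Nat.ltb (S s) (S (S s))) with true by (symmetry; apply Nat.ltb_lt; lia).
    rewrite Nat.eqb_refl. simpl. rewrite Hx. rewrite <- HB1. ring. }
  exists B'. split; [|split; [|split]].
  - rewrite EqS by lia. auto.
  - intros m. destruct Pp as [Sp [P0 Pl]].
    split; [|split].
    + intros i j H. apply zero_pres. apply Sp; auto. intros m'. destruct (HBp m') as [S' _]. apply S'; auto.
    + intros j. apply zero_pres. apply P0; auto. intros m'. destruct (HBp m') as [_ [P0' _]]. apply P0'; auto.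
    + intros i j H1 H2. apply zero_pres. apply Pl; auto. intros m'. destruct (HBp m') as [_ [_ Pl']]. apply Pl'; auto.
  - intros m Hm. destruct (Nat.eq_dec m (S s)) as [e|ne]. subst m. rewrite EqZ. auto.
    rewrite EqS by lia. apply HBK. lia.
  - intros v w Hvw.
    apply eqk_trans with (fun t => sqdist d (Q t v) (Q t w)).
    + apply eqk_sym. apply mu_eqk; auto. intros; apply pt_poly.
    + pose proof (eqk_comp _ _ _ psi (HBe v w Hvw) Ppsi) as H.
      eapply eqk_ext; [ | | exact H]. intros t. simpl. rewrite Ephi. auto. intros; auto.
Qed.

Lemma coef_mul f m : Derive_n f m 0 = coefp f m * INR (Factorial.fact m).
Proof. unfold coefp. field. apply INR_fact_neq_0. Qed.

Lemma an_coef (f : R -> R) : (exists (r : R) (a : nat -> R), 0 < r /\ forall t, Rabs (t - 0) < r -> is_pseries a (t - 0) (f t)) ->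
  exists r, 0 < r /\ forall t, Rabs t < r -> is_pseries (coefp f) t (f t).
Proof.
  intros [r [a [Hr H]]].
  assert (H' : forall t, Rabs t < r -> is_pseries a t (f t)).
  { intros t Ht. pose proof (H t) as H0. rewrite Rminus_0_r in H0. apply H0; auto. }
  exists r. split; auto. intros t Ht. apply (is_pseries_ext a); auto.
  intros m. unfold coefp. rewrite (coef_loc a r f m Hr H'). change (a m = a m * INR (Factorial.fact m) / INR (Factorial.fact m)). field. apply INR_fact_neq_0.
Qed.

Lemma unif (P : nat -> R -> Prop) : (forall j r r', 0 < r' <= r -> P j r -> P j r') ->
  (forall j, exists r, 0 < r /\ P j r) -> forall d, exists r, 0 < r /\ forall j, (j < d)%nat -> P j r.
Proof.
  intros Hm H d. induction d.
  - exists 1. split. lra. intros; lia.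
  - destruct IHd as [r1 [Hr1 H1]]. destruct (H d) as [r2 [Hr2 H2]].
    exists (Rmin r1 r2). split. apply Rmin_glb_lt; auto.
    pose proof (Rmin_l r1 r2). pose proof (Rmin_r r1 r2).
    intros j Hj. destruct (Nat.eq_dec j d). subst. apply Hm with r2; auto. split; auto. apply Rmin_glb_lt; auto.
    apply Hm with r1; auto. split; auto. apply Rmin_glb_lt; auto. apply H1; lia.
Qed.

Lemma Mco_ext d a b v w m : (forall i j, (i <= m)%nat -> a i v j = b i v j /\ a i w j = b i w j) ->
  Mco d a v w m = Mco d b v w m.
Proof.
  intros H. unfold Mco. apply sumR_ext. intros j _. unfold PS_mult. apply sum_eq. intros i Hi.
  destruct (H i j Hi) as [H1 H2]. destruct (H (m - i)%nat j ltac:(lia)) as [H3 H4].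
  rewrite H1, H2, H3, H4. auto.
Qed.

Lemma poly_analytic U f : is_poly f -> analytic_on U f.
Proof.
  intros Hf t0 _. assert (Pg : is_poly (fun u => f (u + t0))).
  { apply poly_comp; auto. apply poly_plus. apply poly_id. apply poly_const. }
  destruct (poly_series _ Pg) as [a Ha]. exists 1, a. split. lra. intros t _.
  replace (f t) with (f ((t - t0) + t0)) by (f_equal; ring). apply Ha.
Qed.

Lemma pinned_pt n d l p k B t : pinned_pos n d l p -> (forall m, pinned_pos n d l (B m)) ->
  pinned_pos n d l (poly_traj p k B t).
Proof.
  intros [Sp [P0 Pl]] HB. unfold poly_traj. split; [|split].
  - intros i j H. rewrite Sp by auto. rewrite sumR_zero. ring. intros m _. destruct (HB (S m)) as [S' _]. rewrite S' by auto. ring.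
  - intros j. rewrite P0. rewrite sumR_zero. ring. intros m _. destruct (HB (S m)) as [_ [P0' _]]. rewrite P0'. ring.
  - intros i j H1 H2. rewrite Pl by auto. rewrite sumR_zero. ring. intros m _. destruct (HB (S m)) as [_ [_ Pl']]. rewrite Pl' by auto. ring.
Qed.

Theorem lemma2p21 (n d l : nat) (E : nat -> nat -> Prop) (p : config)
  (Kbar : config -> Prop) (k : nat) :
  framework n d E p ->
  pinned n d l p ->
  dimK_one n d l E p ->
  complement_K n d l E p Kbar ->
  (1 <= k)%nat ->
  (exists q, flex n d l E p 1 k q) ->
  exists c : nat -> config,
    (forall m, (2 <= m <= k)%nat -> Kbar (c m)) /\
    flex n d l E p 1 k (poly_traj p k c).
Proof.
  intros Hfw Hpin HdimK Hcomp Hk [q [Htraj [Hact Hmeas]]].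
  destruct Hpin as [Hln [Haff [Hspan Pp]]].
  destruct Htraj as [eps [Heps [[delta [Hdelta Han]] [Hq0 [Hqpin _]]]]].
  set (A := fun m i j => coefp (fun t => q t i j) m).
  assert (An0 : forall i j, exists r, 0 < r /\ forall t, Rabs t < r -> is_pseries (fun m => A m i j) t (q t i j)).
  { intros i j. apply an_coef. apply (Han i j 0). lra. }
  assert (A0 : forall i j, A 0%nat i j = p i j).
  { intros i j. unfold A. rewrite coef0. auto. }
  assert (ZA : forall i j m, (forall t, 0 <= t <= eps -> q t i j = 0) -> A m i j = 0).
  { intros i j m H. destruct m. unfold A. rewrite coef0. apply H; lra.
    destruct (An0 i j) as [r [Hr Hs]]. unfold A, coefp.
    rewrite (half_const _ r eps (fun t => q t i j) 0 m Hr Heps Hs H). unfold Rdiv; ring. }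
  assert (PA : forall m, pinned_pos n d l (A m)).
  { intros m. split; [|split].
    - intros i j H. apply ZA. intros t Ht. destruct (Hqpin t Ht) as [S' _]. auto.
    - intros j. apply ZA. intros t Ht. destruct (Hqpin t Ht) as [_ [P0' _]]. auto.
    - intros i j H1 H2. apply ZA. intros t Ht. destruct (Hqpin t Ht) as [_ [_ Pl']]. auto. }
  set (A1 := A 1%nat).
  assert (Nz : exists i0 j0, (i0 < n)%nat /\ (j0 < d)%nat /\ A1 i0 j0 <> 0).
  { destruct Hact as [_ Hnv]. apply NNPP. intros Hn. apply Hnv. intros i j Hi Hj m Hm.
    assert (m = 1%nat) by lia. subst m.
    rewrite coef_mul. fold (A 1%nat i j). fold A1.
    destruct (Req_dec (A1 i j) 0) as [e|ne]. rewrite e; ring. exfalso. apply Hn. eauto. }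
  destruct Nz as [i0 [j0 [Hi0 [Hj0 Hnz]]]].
  assert (Mq : forall v w m, E v w -> (1 <= m <= k)%nat -> Mco d A v w m = 0).
  { intros v w m Hvw Hm.
    destruct (unif (fun j r => forall t, Rabs t < r ->
       is_pseries (fun m => A m v j) t (q t v j) /\ is_pseries (fun m => A m w j) t (q t w j))) with (d := d)
      as [rho [Hrho Hu]].
    - intros j r r' Hr H t Ht. apply H. lra.
    - intros j. destruct (An0 v j) as [r1 [Hr1 H1]]. destruct (An0 w j) as [r2 [Hr2 H2]].
      exists (Rmin r1 r2). split. apply Rmin_glb_lt; auto.
      pose proof (Rmin_l r1 r2). pose proof (Rmin_r r1 r2). intros t Ht. split. apply H1; lra. apply H2; lra.
    - pose proof (GL q A d v w rho Hrho (fun j t Hj Ht => Hu j Hj t Ht) m) as G.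
      rewrite (Hmeas v w Hvw m Hm) in G. pose proof (INR_fact_neq_0 m).
      symmetry in G. apply Rmult_integral in G. destruct G; auto. exfalso; auto. }
  assert (KA1 : inK n d l E p A1).
  { split. apply PA. intros v w Hvw. pose proof (Mq v w 1%nat Hvw ltac:(lia)) as M.
    assert (Eq : Mco d A v w 1%nat = 2 * dotR d (vsub (p v) (p w)) (vsub (A1 v) (A1 w))).
    { unfold Mco, dotR, vsub. rewrite <- sumR_scal. apply sumR_ext. intros j _.
      unfold PS_mult. simpl sum_f_R0. replace (1 - 0)%nat with 1%nat by lia. replace (1 - 1)%nat with 0%nat by lia.
      rewrite !A0. unfold A1. ring. }
    lra. }
  assert (Dec : forall x, pinned_pos n d l x -> exists g z, Kbar z /\ forall i j, x i j = g * A1 i j + z i j).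
  { intros x Px. destruct HdimK as [V [KV [V0 Vspan]]].
    destruct (Vspan A1 KA1) as [lam Hlam].
    assert (Hl : lam <> 0).
    { intros e. apply Hnz. rewrite Hlam. unfold cfg_scale. rewrite e. ring. }
    destruct Hcomp as [_ [_ [_ [_ [_ Hdec]]]]].
    destruct (Hdec x Px) as [y [z [Ky [Kz Hx]]]].
    destruct (Vspan y Ky) as [c Hc].
    exists (c / lam), z. split; auto. intros i j. rewrite Hx, Hlam, Hc. unfold cfg_add, cfg_scale. field. auto. }
  assert (Base : Inv n d l E p Kbar k A1 1 A).
  { split; [reflexivity|split; [exact PA|split]].
    - intros; lia.
    - intros v w Hvw.
      set (T := poly_traj p k A).
      assert (PT : is_poly (fun t => sqdist d (T t v) (T t w))).
      { apply mu_poly. intros; apply pt_poly. }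
      eapply eqk_ext; [ | | apply (eqk_trunc k _ PT)]. intros; auto.
      intros t. rewrite <- (pt_at0 p k A). unfold polyfun. rewrite sumR_shift. rewrite sumR_zero.
      rewrite coef0. unfold T. rewrite pow_O. ring.
      intros m Hm. unfold coefp.
      rewrite (GL T (fun m i j => pc (S k) (cc p A i j) m) d v w 1 ltac:(lra)).
      rewrite (Mco_ext d _ A). rewrite Mq; auto. unfold Rdiv; ring. lia.
      intros i j Hi. unfold pc. replace (Nat.ltb i (S k)) with true by (symmetry; apply Nat.ltb_lt; lia).
      destruct i; simpl; rewrite ?A0; auto.
      intros j t' _ _. split; apply series_pt. }
  assert (Iter : forall s, (1 <= s <= k)%nat -> exists B, Inv n d l E p Kbar k A1 s B).
  { intros s. induction s. intros; lia. intros Hs. destruct (Nat.eq_dec s 0). subst. eauto.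
    destruct IHs as [B HB]. lia. apply (step n d l E p Kbar k A1 s B); auto; lia. }
  destruct (Iter k ltac:(lia)) as [B [HB1 [HBp [HBK HBe]]]].
  assert (D1 : Derive_n (fun t => poly_traj p k B t i0 j0) 1 0 <> 0).
  { rewrite coef_mul, pt_coef. unfold pc. replace (Nat.ltb 1 (S k)) with true by (symmetry; apply Nat.ltb_lt; lia).
    simpl. rewrite HB1. rewrite Rmult_1_r. auto. }
  exists B. split. intros m Hm. apply HBK. auto.
  split; [|split].
  - exists 1. split. lra. split.
    exists 1. split. lra. intros i j. apply poly_analytic. apply pt_poly.
    split. intros i j. rewrite pt_at0. auto.
    split. intros t _. apply pinned_pt; auto.
    apply NNPP. intros Hn. apply D1.
    apply (half_const (pc (S k) (cc p B i0 j0)) 1 1 _ (p i0 j0) 0); try lra.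
    intros; apply series_pt.
    intros t Ht. destruct (Req_dec (poly_traj p k B t i0 j0) (p i0 j0)) as [e|ne]; auto.
    exfalso. apply Hn. exists t. split; auto. exists i0, j0. auto.
  - split. intros i j _ _ m Hm. lia.
    intros H. apply D1. apply (H i0 j0 Hi0 Hj0 1%nat). lia.
  - intros v w Hvw m Hm. rewrite coef_mul.
    rewrite (eqk_coef k _ (fun _ => sqdist d (p v) (p w)) m (poly_const _) (HBe v w Hvw)) by lia.
    rewrite coef_const. destruct m. lia. simpl. ring.
Qed.
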